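(* Let $\widehat{\mathscr{O}}$ be a commutative local principal ideal ring, complete with respect to its maximal ideal $\mathfrak{m}=(\pi)$, whose residue field $k$ has characteristic different from $2$. Let $A\in \mathrm{GL}_n(\widehat{\mathscr{O}})$, and denote by $\overline{A}\in\mathrm{M}_n(k)$ its reduction modulo $\mathfrak m$. Assume that there exists a monic polynomial $F(t)\in \widehat{\mathscr{O}}[t]$ with $F(A)=0$ such that $$\deg\bigl(\overline{F}(t)\bigr)=\deg\bigl(\mathrm{Min}_{k,\overline{A}}(t)\bigr),$$ where $\overline{F}$ is the reduction of $F$ modulo $\mathfrak m$ and $\mathrm{Min}_{k,\overline{A}}$ is the minimal polynomial of $\overline{A}$ over $k$. Then, for every $i\in\mathbb{N}$, the null ideal $$N^{\mathscr{O}_{i+1}}_{A_{i+1}}=\{G(t)\in\mathscr{O}_{i+1}[t]: G(A_{i+1})=0\}$$ is principal and is generated by $F_{i+1}(t)$, where $\mathscr{O}_{i}=\widehat{\mathscr{O}}/\pi^{i}\widehat{\mathscr{O}}$, and $A_{i}$, $F_{i}(t)$ denote the images of $A$ and $F(t)$ under the reduction $\widehat{\mathscr{O}}\to\mathscr{O}_{i}$.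
   Context: A commutative ring $\mathscr R$ is complete with respect to an ideal $I$ if the canonical map $\mathscr R\to\varprojlim_j \mathscr R/I^j$ is an isomorphism. For $\ell\ge1$, $\mathscr{O}_\ell=\widehat{\mathscr{O}}/\pi^\ell\widehat{\mathscr{O}}$; reductions of elements, matrices and polynomials from $\widehat{\mathscr{O}}$ to $\mathscr{O}_\ell$ are applied entrywise/coefficientwise. For a commutative ring $\mathscr R$ and $X\in\mathrm{M}_n(\mathscr R)$, the null ideal is $N^{\mathscr R}_X=\{G\in\mathscr R[t]:G(X)=0\}$. *)

(* Defs.v *)
From HB Require Import structures.
From mathcomp Require Import all_boot all_order all_algebra.
Set Implicit Arguments. Unset Strict Implicit. Unset Printing Implicit Defensive.
Import GRing.Theory.
Local Open Scope ring_scope.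

Definition dvdr (R : comNzRingType) (a x : R) : Prop := exists r : R, x = r * a.

Definition is_ideal (R : comNzRingType) (I : R -> Prop) : Prop :=
  [/\ I 0, (forall x y, I x -> I y -> I (x + y)) & (forall r x, I x -> I (r * x))].

Definition principal_ideal_ring (R : comNzRingType) : Prop :=
  forall I : R -> Prop, is_ideal I -> exists a : R, forall x, I x <-> dvdr a x.

(* R is local and its (unique) maximal ideal, the set of non-units, is (pi) *)
Definition local_with_maximal_ideal (R : comUnitRingType) (pi : R) : Prop :=
  forall x : R, x \isn't a GRing.unit <-> dvdr pi x.

(* R is complete w.r.t. I = (pi): the canonical map R -> lim_j R/I^j
   (I^j = pi^j R) is injective and surjective. *)
Definition complete_wrt (R : comNzRingType) (pi : R) : Prop :=
  (forall x : R, (forall j, dvdr (pi ^+ j) x) -> x = 0) /\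
  (forall s : nat -> R, (forall j, dvdr (pi ^+ j) (s j.+1 - s j)) ->
     exists x : R, forall j, dvdr (pi ^+ j) (x - s j)).

Definition null_ideal (S : comNzRingType) (n : nat) (X : 'M[S]_n.+1) : {poly S} -> Prop :=
  fun G => horner_mx X G = 0.

(* Main.v *)
Require Import Defs.
From HB Require Import structures.
From mathcomp Require Import all_boot all_order all_algebra.
Import GRing.Theory.
Local Open Scope ring_scope.

Lemma dvdr_mulmx (R : comNzRingType) (a : R) p q (v : 'rV[R]_p) (W : 'M[R]_(p, q)) :
  (forall j, dvdr a (v 0 j)) -> forall j, dvdr a ((v *m W) 0 j).
Proof.
move=> hv j; rewrite mxE; elim/big_ind: _ => [|x y [r1 ->] [r2 ->]|k _].
- by exists 0; rewrite mul0r.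
- by exists (r1 + r2); rewrite mulrDl.
- by have [r ->] := hv k; exists (r * W k j); rewrite mulrAC.
Qed.

Theorem proposition2p2
  (R : comUnitRingType) (pi : R)
  (hloc : local_with_maximal_ideal pi)
  (hpir : principal_ideal_ring R)
  (hcomp : complete_wrt pi)
  (k : fieldType) (res : {rmorphism R -> k})
  (hres_surj : forall y : k, exists x : R, res x = y)
  (hres_ker : forall x : R, res x = 0 <-> dvdr pi x)
  (hchar : ~~ (2%N \in [pchar k]))
  (n : nat) (A : 'M[R]_n.+1) (hA : A \in unitmx)
  (F : {poly R}) (hFmonic : F \is monic) (hFA : horner_mx A F = 0)
  (hdeg : size (map_poly res F) = size (mxminpoly (map_mx res A))) :
  forall (i : nat) (S : comNzRingType) (red : {rmorphism R -> S}),
    (forall y : S, exists x : R, red x = y) ->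
    (forall x : R, red x = 0 <-> dvdr (pi ^+ i.+1) x) ->
    forall G : {poly S},
      null_ideal (map_mx red A) G <-> exists Q : {poly S}, G = Q * map_poly red F.
Proof.
move=> i S red hred_surj hred_ker G.
pose a := pi ^+ i.+1.
pose d := degree_mxminpoly (map_mx res A).
have sizeF : size F = d.+1.
  rewrite -size_mxminpoly -hdeg size_map_poly_id0 //.
  by rewrite (eqP hFmonic) rmorph1 oner_eq0.
have hres' : forall y : k, exists x : R, res x == y.
  by move=> y; have [x hx] := hres_surj y; exists x; apply/eqP.
pose lift y := xchoose (hres' y).
have liftK y : res (lift y) = y by apply/eqP; exact: (xchooseP (hres' y)).
pose M := powers_mx A d.
have : row_free (map_mx res M) by rewrite map_powers_mx; exact: minpoly_mx_free.
case/row_freeP => Bk hBk.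
pose BR := map_mx lift Bk.
pose N := M *m BR.
have hN : N \in unitmx.
  rewrite unitmxE; apply/negPn/negP => hnu.
  have : dvdr pi (\det N) by apply/hloc.
  move/hres_ker/eqP; rewrite -det_map_mx map_mxM.
  have -> : map_mx res BR = Bk by apply/matrixP => p q; rewrite !mxE liftK.
  by rewrite hBk det1 oner_eq0.
have key : forall r : {poly R}, (size r <= d)%N ->
    (forall p q, dvdr a ((horner_mx A r) p q)) -> forall j, dvdr a r`_j.
  move=> r hr hdiv.
  pose u := poly_rV r : 'rV[R]_d.
  have hu : forall j, dvdr a ((u *m M) 0 j).
    move=> j; have := horner_rVpoly A u; rewrite poly_rV_K // => hAr.
    have -> : u *m M = mxvec (horner_mx A r) by rewrite hAr vec_mxK.
    by case/mxvec_indexP: j => p q; rewrite mxvecE.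
  have hu2 : forall j, dvdr a (u 0 j).
    move=> j; rewrite -(mulmxK hN u) /N mulmxA.
    by apply: dvdr_mulmx; apply: dvdr_mulmx.
  move=> j; rewrite -(poly_rV_K hr) coef_rVpoly.
  case: insubP => [j' _ _|_]; first exact: hu2.
  by exists 0; rewrite mul0r.
split; last first.
  case=> Q ->; rewrite /null_ideal rmorphM /= -map_horner_mx hFA.
  by rewrite map_mx0 mulr0.
rewrite /null_ideal => hG.
have hred' : forall y : S, exists x : R, red x == y.
  by move=> y; have [x hx] := hred_surj y; exists x; apply/eqP.
pose lifts y := xchoose (hred' y).
have liftsK y : red (lifts y) = y by apply/eqP; exact: (xchooseP (hred' y)).
pose g := \poly_(j < size G) lifts G`_j.
have hg : map_poly red g = G.
  apply/polyP => j; rewrite coef_map /= coef_poly.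
  case: ifP => hj; first by rewrite liftsK.
  idtac.
  by rewrite rmorph0 nth_default // leqNgt hj.
have hdiv := Pdiv.RingMonic.rdivp_eq hFmonic g.
set q := Pdiv.Ring.rdivp g F in hdiv; set r := Pdiv.Ring.rmodp g F in hdiv.
have hr : (size r <= d)%N.
  rewrite -ltnS -sizeF /r Pdiv.Ring.ltn_rmodp; apply: monic_neq0 hFmonic.
have hrA : map_mx red (horner_mx A r) = 0.
  have -> : horner_mx A r = horner_mx A g.
    by rewrite [in RHS]hdiv rmorphD rmorphM /= hFA mulr0 add0r.
  by rewrite map_horner_mx hg.
have hr0 : map_poly red r = 0.
  apply/polyP => j; rewrite coef_map coef0 /=; apply/hred_ker.
  apply: key => // p q'; apply/hred_ker.
  by move/matrixP: hrA => /(_ p q'); rewrite !mxE.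
exists (map_poly red q).
by rewrite -hg {1}hdiv rmorphD rmorphM /= hr0 addr0.
Qed.
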